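(* Let $f$ be a periodic traveling wave of speed $c$ ($c^2\neq 1$). For $\beta\in\mathbb{R}$, the imaginary number $\lambda=i\beta$ lies in $\sigma(\mathrm{P})$ if and only if it lies in $\sigma(\mathrm{Q})$.
   Context: A traveling wave of speed $c$ ($c^2\neq1$) is a real solution $f$ of $(c^2-1)f''+\sin f=0$, with energy $E$ given by $\tfrac12(c^2-1)(f')^2+1-\cos f=E$; periodic traveling waves are librational ($0<E<2$) or rotational ($E<0$ if $c^2<1$, $E>2$ if $c^2>1$). Let $\gamma=1/(c^2-1)$. $\sigma(\mathrm{P})$ is the set of $\lambda\in\mathbb{C}$ for which $p''-2c\gamma\lambda p'+\gamma(\lambda^2+\cos f(z))p=0$ has a nontrivial solution bounded on $\mathbb{R}$. $\sigma(\mathrm{Q})$ is the set of $\lambda\in\mathbb{C}$ for which $q''+\gamma\cos(f(z))q=\mu q$ with $\mu=\gamma^2\lambda^2$ has a nontrivial solution bounded on $\mathbb{R}$. *)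

(* Defs.v *)
From Stdlib Require Import Reals.
From Coquelicot Require Import Coquelicot.
Open Scope R_scope.

Definition gam (c : R) : R := / (c ^ 2 - 1).

Definition tw_sol (c : R) (f f1 f2 : R -> R) : Prop :=
  (forall z, is_derive f z (f1 z)) /\
  (forall z, is_derive f1 z (f2 z)) /\
  (forall z, (c ^ 2 - 1) * f2 z + sin (f z) = 0).

Definition traveling_wave (c : R) (f : R -> R) : Prop :=
  exists f1 f2 : R -> R, tw_sol c f f1 f2.

Definition has_energy (c : R) (f : R -> R) (E : R) : Prop :=
  exists f1 f2 : R -> R, tw_sol c f f1 f2 /\
    forall z, / 2 * (c ^ 2 - 1) * (f1 z) ^ 2 + 1 - cos (f z) = E.

Definition librational (c : R) (f : R -> R) : Prop :=
  exists E, has_energy c f E /\ 0 < E < 2.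

Definition rotational (c : R) (f : R -> R) : Prop :=
  exists E, has_energy c f E /\
    ((c ^ 2 < 1 /\ E < 0) \/ (1 < c ^ 2 /\ 2 < E)).

Definition periodic_tw (c : R) (f : R -> R) : Prop :=
  c ^ 2 <> 1 /\ traveling_wave c f /\ (librational c f \/ rotational c f).

Definition bounded_C (p : R -> C) : Prop := exists M : R, forall z, Cmod (p z) <= M.

Definition in_sigma_P (c : R) (f : R -> R) (l : C) : Prop :=
  exists p p1 p2 : R -> C,
    (forall z, is_derive p z (p1 z)) /\
    (forall z, is_derive p1 z (p2 z)) /\
    (forall z, (p2 z - RtoC (2 * c * gam c) * l * p1 z
                + RtoC (gam c) * (l * l + RtoC (cos (f z))) * p z)%C = 0%C) /\
    bounded_C p /\ (exists z, p z <> 0%C).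

(* sigma(Q): q'' + gamma cos f q = mu q, mu = gamma^2 lambda^2,
   has a nontrivial solution bounded on R *)
Definition in_sigma_Q (c : R) (f : R -> R) (l : C) : Prop :=
  exists q q1 q2 : R -> C,
    (forall z, is_derive q z (q1 z)) /\
    (forall z, is_derive q1 z (q2 z)) /\
    (forall z, (q2 z + RtoC (gam c * cos (f z)) * q z)%C
               = (RtoC (gam c ^ 2) * (l * l) * q z)%C) /\
    bounded_C q /\ (exists z, q z <> 0%C).

(* Main.v *)
Require Import Defs.
From Stdlib Require Import Reals Lra.
From Coquelicot Require Import Coquelicot.
Open Scope R_scope.

Lemma der_pair (f g : R -> R) x a b :
  is_derive f x a -> is_derive g x b ->
  is_derive (fun t => (f t, g t) : C) x ((a, b) : C).
Proof.
  intros Hf Hg.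
  assert (H := is_derive_plus (V := prod_NormedModule R_AbsRing R_NormedModule R_NormedModule) _ _ x _ _
    (is_derive_scal_l f x a ((1,0) : R*R) Hf) (is_derive_scal_l g x b ((0,1) : R*R) Hg)).
  simpl in H.
  unfold plus, scal in H; simpl in H.
  unfold prod_plus, prod_scal in H; simpl in H.
  unfold plus, scal, mult in H; simpl in H.
  unfold mult in H; simpl in H.
  replace ((a,b) : C) with (a * 1 + b * 0, a * 0 + b * 1).
  2: apply injective_projections; simpl; ring.
  eapply is_derive_ext; [|exact H].
  intros t; apply injective_projections; simpl; ring.
Qed.

Lemma der_fst (p : R -> C) x l : is_derive p x l -> is_derive (fun t => fst (p t)) x (fst l).
Proof.
  intros H. unfold is_derive.
  assert (L := filterdiff_comp' p fst x _ _ H (filterdiff_linear _ is_linear_fst)).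
  exact L.
Qed.
Lemma der_snd (p : R -> C) x l : is_derive p x l -> is_derive (fun t => snd (p t)) x (snd l).
Proof.
  intros H. unfold is_derive.
  exact (filterdiff_comp' p snd x _ _ H (filterdiff_linear _ is_linear_snd)).
Qed.

Lemma der_mult (p q : R -> C) x a b :
  is_derive p x a -> is_derive q x b ->
  is_derive (fun t => p t * q t)%C x (a * q x + p x * b)%C.
Proof.
  intros Hp Hq.
  pose proof (der_fst _ _ _ Hp) as P1. pose proof (der_snd _ _ _ Hp) as P2.
  pose proof (der_fst _ _ _ Hq) as Q1. pose proof (der_snd _ _ _ Hq) as Q2.
  assert (D := der_pair _ _ x _ _
    (is_derive_minus _ _ x _ _ (is_derive_mult _ _ x _ _ P1 Q1 (fun _ _ => Rmult_comm _ _))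
                               (is_derive_mult _ _ x _ _ P2 Q2 (fun _ _ => Rmult_comm _ _)))
    (is_derive_plus _ _ x _ _ (is_derive_mult _ _ x _ _ P1 Q2 (fun _ _ => Rmult_comm _ _))
                               (is_derive_mult _ _ x _ _ P2 Q1 (fun _ _ => Rmult_comm _ _)))).
  eapply is_derive_ext.
  2: { replace (a * q x + p x * b)%C with
    ((minus (plus (mult (fst a) (fst (q x))) (mult (fst (p x)) (fst b)))
       (plus (mult (snd a) (snd (q x))) (mult (snd (p x)) (snd b))),
     plus (plus (mult (fst a) (snd (q x))) (mult (fst (p x)) (snd b)))
       (plus (mult (snd a) (fst (q x))) (mult (snd (p x)) (fst b)))) : C).
    exact D.
    destruct a, b, (p x), (q x). unfold minus, plus, mult, opp; simpl.
    apply injective_projections; simpl; ring. }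
  intros t. simpl. destruct (p t), (q t). unfold minus, plus, mult, opp; simpl.
  apply injective_projections; simpl; ring.
Qed.

Definition w (k t : R) : C := (cos (k * t), sin (k * t)).

Lemma der_w k t : is_derive (w k) t ((0, k) * w k t)%C.
Proof.
  unfold w.
  assert (D := der_pair (fun t => cos (k * t)) (fun t => sin (k*t)) t (- sin (k*t) * k) (cos (k*t) * k)).
  replace (((0, k) * (cos (k * t), sin (k * t)))%C) with (((- sin (k*t) * k), (cos (k*t) * k)) : C).
  apply D; auto_derive; auto; ring.
  apply injective_projections; simpl; ring.
Qed.

Lemma Cmod_w k t : Cmod (w k t) = 1.
Proof.
  unfold Cmod, w; simpl. pose proof (sin2_cos2 (k*t)) as HH. unfold Rsqr in HH.
  replace (cos (k * t) * (cos (k * t) * 1) + sin (k * t) * (sin (k * t) * 1)) with 1 by lra.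
  apply sqrt_1.
Qed.

Lemma w_inv k t : (w k t * w (-k) t = 1)%C.
Proof.
  unfold w. replace (-k * t) with (- (k*t)) by ring. rewrite cos_neg, sin_neg.
  apply injective_projections; simpl.
  - pose proof (sin2_cos2 (k*t)) as HH. unfold Rsqr in HH. lra.
  - ring.
Qed.
Definition ia (k : R) : C := (0, k).

Lemma alg1 c beta (W Q Q1 Q2 : C) (co : R) : c^2 <> 1 ->
  (Q2 + RtoC (gam c * co) * Q = RtoC (gam c ^ 2) * ((Ci * RtoC beta) * (Ci * RtoC beta)) * Q)%C ->
  (W * (Q2 + ia (c*gam c*beta) * Q1 + ia (c*gam c*beta) * (Q1 + ia (c*gam c*beta) * Q))
   - RtoC (2 * c * gam c) * (Ci * RtoC beta) * (W * (Q1 + ia (c*gam c*beta) * Q))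
   + RtoC (gam c) * ((Ci * RtoC beta) * (Ci * RtoC beta) + RtoC co) * (W * Q) = 0)%C.
Proof.
  intros Hc H.
  assert (E : Q2 = (RtoC (gam c ^ 2) * ((Ci * RtoC beta) * (Ci * RtoC beta)) * Q - RtoC (gam c * co) * Q)%C)
    by (rewrite <- H; ring).
  rewrite E. clear H E.
  assert (Hc' : c*c - 1 <> 0) by (simpl in Hc; lra).
  destruct W as [w1 w2], Q as [x y], Q1 as [x1 y1]. unfold gam, RtoC, Ci, ia.
  apply injective_projections; simpl; field; simpl in Hc'; lra.
Qed.

Lemma alg2 c beta (W P P1 P2 : C) (co : R) : c^2 <> 1 ->
  (P2 - RtoC (2 * c * gam c) * (Ci * RtoC beta) * P1
                + RtoC (gam c) * ((Ci * RtoC beta) * (Ci * RtoC beta) + RtoC co) * P = 0)%C ->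
  (W * (P2 + ia (-(c*gam c*beta)) * P1 + ia (-(c*gam c*beta)) * (P1 + ia (-(c*gam c*beta)) * P))
   + RtoC (gam c * co) * (W * P)
   = RtoC (gam c ^ 2) * ((Ci * RtoC beta) * (Ci * RtoC beta)) * (W * P))%C.
Proof.
  intros Hc H.
  assert (E : P2 = (RtoC (2 * c * gam c) * (Ci * RtoC beta) * P1
                - RtoC (gam c) * ((Ci * RtoC beta) * (Ci * RtoC beta) + RtoC co) * P)%C).
  { set (X := (RtoC (2 * c * gam c) * (Ci * RtoC beta) * P1)%C) in *.
    set (Y := (RtoC (gam c) * ((Ci * RtoC beta) * (Ci * RtoC beta) + RtoC co) * P)%C) in *.
    transitivity ((P2 - X + Y) + X - Y)%C. ring. rewrite H. ring. }
  rewrite E. clear H E.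
  assert (Hc' : c*c - 1 <> 0) by (simpl in Hc; lra).
  destruct W as [w1 w2], P as [x y], P1 as [x1 y1]. unfold gam, RtoC, Ci, ia.
  apply injective_projections; simpl; field; simpl in Hc'; lra.
Qed.

Lemma is_derive_eq (f : R -> C) x l l' : is_derive f x l -> l = l' -> is_derive f x l'.
Proof. intros H E; subst; exact H. Qed.

Lemma transform k (q q1 q2 : R -> C) : (forall z, is_derive q z (q1 z)) -> (forall z, is_derive q1 z (q2 z)) ->
 (forall z, is_derive (fun t => w k t * q t)%C z (w k z * (q1 z + ia k * q z))%C) /\
 (forall z, is_derive (fun t => w k t * (q1 t + ia k * q t))%C z
     (w k z * (q2 z + ia k * q1 z + ia k * (q1 z + ia k * q z)))%C).
Proof.
  intros H1 H2; split; intros z.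
  - eapply is_derive_eq; [apply der_mult; [apply der_w | apply H1] |].
    unfold ia; match goal with |- ?a = ?b => change (@eq C a b) end; ring.
  - assert (D : is_derive (fun t => q1 t + ia k * q t)%C z (q2 z + ia k * q1 z)%C).
    { assert (D0 := der_mult (fun _ => ia k) q z _ _ (is_derive_const _ _) (H1 z)).
      assert (D1 := is_derive_plus _ _ z _ _ (H2 z) D0).
      eapply is_derive_eq. exact D1.
      unfold plus, zero; simpl. unfold prod_plus, prod_zero; simpl. unfold plus, zero; simpl.
      apply injective_projections; simpl; ring. }
    eapply is_derive_eq; [apply der_mult; [apply der_w | apply D] |].
    unfold ia; match goal with |- ?a = ?b => change (@eq C a b) end; ring.
Qed.

Theorem corollary3p2 (c : R) (f : R -> R) (beta : R) :
  c ^ 2 <> 1 -> periodic_tw c f ->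
  (in_sigma_P c f (Ci * RtoC beta)%C <-> in_sigma_Q c f (Ci * RtoC beta)%C).
Proof.
  intros Hc _. split.
  - intros (p & p1 & p2 & Hp1 & Hp2 & Heq & [M HM] & [z0 Hz0]).
    set (k := -(c * gam c * beta)).
    destruct (transform k p p1 p2 Hp1 Hp2) as [T1 T2].
    exists (fun t => w k t * p t)%C, (fun t => w k t * (p1 t + ia k * p t))%C,
      (fun t => w k t * (p2 t + ia k * p1 t + ia k * (p1 t + ia k * p t)))%C.
    split; [exact T1|split; [exact T2|split; [|split]]].
    + intros zz. apply (alg2 c beta (w k zz) (p zz) (p1 zz) (p2 zz) (cos (f zz)) Hc (Heq zz)).
    + exists M. intros zz. rewrite Cmod_mult, Cmod_w, Rmult_1_l. apply HM.
    + exists z0. intros E. apply Hz0.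
      transitivity (w (-k) z0 * (w k z0 * p z0))%C.
      * rewrite Cmult_assoc, (Cmult_comm (w (-k) z0)), w_inv. ring.
      * rewrite E. ring.
  - intros (q & q1 & q2 & Hq1 & Hq2 & Heq & [M HM] & [z0 Hz0]).
    set (k := c * gam c * beta).
    destruct (transform k q q1 q2 Hq1 Hq2) as [T1 T2].
    exists (fun t => w k t * q t)%C, (fun t => w k t * (q1 t + ia k * q t))%C,
      (fun t => w k t * (q2 t + ia k * q1 t + ia k * (q1 t + ia k * q t)))%C.
    split; [exact T1|split; [exact T2|split; [|split]]].
    + intros zz. apply (alg1 c beta (w k zz) (q zz) (q1 zz) (q2 zz) (cos (f zz)) Hc (Heq zz)).
    + exists M. intros zz. rewrite Cmod_mult, Cmod_w, Rmult_1_l. apply HM.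
    + exists z0. intros E. apply Hz0.
      transitivity (w (-k) z0 * (w k z0 * q z0))%C.
      * rewrite Cmult_assoc, (Cmult_comm (w (-k) z0)), w_inv. ring.
      * rewrite E. ring.
Qed.
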